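(* Let $f: \mathbb{R}^n \to \mathbb{R}^n$ be topical, $\lambda \in \mathbb{R}$ and $k \ge 1$. There is a function $H^k: \mathbb{R}\cup\{-\infty\} \to \mathbb{R}\cup\{-\infty\}$ such that for every vertex $X$ of $\mathcal{G}^k(f)$ lying in a strongly connected component of $\mathcal{G}^k(f)$ — more precisely, for every strongly connected component $\mathcal{X}$ of $\mathcal{G}^k(f)$ — for all $i,j \in \bigcup_{X\in\mathcal{X}}\sigma(X)$ and all $x \in \mathbb{R}^n$: if $f(x) \le \lambda + x$ and $x \ge 0$, then $x_j \le H^k(x_i)$.
   Context: $f$ is topical if $f(x+h) = f(x)+h$ for all $h\in\mathbb{R}$ (scalar added to each coordinate) and $x\le y$ componentwise implies $f(x)\le f(y)$. $e_J$ is the characteristic vector of $J\subseteq\{1,\dots,n\}$. Aggregated graphs: $\mathcal{G}^1(f)$ is the directed graph on $\{1,\dots,n\}$ with an edge $i\to j$ iff $\lim_{u\to\infty} f_i(u e_{\{j\}}) = \infty$, with $\sigma(i) = \{i\}$. For $k\ge2$, the vertices of $\mathcal{G}^k(f)$ are the strongly connected components of $\mathcal{G}^{k-1}(f)$, a component $X$ being associated with $\sigma(X) = \bigcup_{Y\in X}\sigma(Y)$; there is an edge $I\to J$ in $\mathcal{G}^k(f)$ iff there exists $i\in\sigma(I)$ with $\lim_{u\to\infty} f_i(u e_{\sigma(J)}) = \infty$. A strongly connected component is an equivalence class under: $X$ communicates with $Y$ iff $X=Y$ or there are directed paths both from $X$ to $Y$ and from $Y$ to $X$. *)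

(* Defs.v *)
From HB Require Import structures.
From mathcomp Require Import all_boot all_order all_algebra.
From mathcomp Require Import all_classical all_reals all_analysis.
Set Implicit Arguments. Unset Strict Implicit. Unset Printing Implicit Defensive.
Import Order.TTheory GRing.Theory Num.Theory.
Local Open Scope ring_scope.

Section Aggregated.
Variables (R : realType) (n : nat).
Variable f : ('I_n -> R) -> ('I_n -> R).

Definition topical : Prop :=
  (forall (x : 'I_n -> R) (h : R) (l : 'I_n), f (fun j => x j + h) l = f x l + h) /\
  (forall x y : 'I_n -> R, (forall j, x j <= y j) -> forall l, f x l <= f y l).

Definition char_vec (J : {set 'I_n}) (u : R) : 'I_n -> R :=
  fun j => if j \in J then u else 0.

Definition diverges (i : 'I_n) (J : {set 'I_n}) : Prop :=
  ((fun u : R => f (char_vec J u) i) @ +oo%R --> +oo%R)%classic.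

(* A vertex of an aggregated graph is represented by its sigma-set
   (a subset of 'I_n); L is the set of (sigma-sets of) vertices. *)
Definition agg_edge (L : {set {set 'I_n}}) : rel {set 'I_n} :=
  fun I J => [&& I \in L, J \in L & `[< exists2 i, i \in I & diverges i J >]].

Definition communicate (L : {set {set 'I_n}}) (I J : {set 'I_n}) : bool :=
  (I == J) || (connect (agg_edge L) I J && connect (agg_edge L) J I).

Definition scc_sigma (L : {set {set 'I_n}}) (I : {set 'I_n}) : {set 'I_n} :=
  \bigcup_(J in L | communicate L I J) J.

Definition next_level (L : {set {set 'I_n}}) : {set {set 'I_n}} :=
  [set scc_sigma L I | I in L].

(* vertex sets of G^1, G^2, ...: agg_level m = vertices of G^(m+1) *)
Fixpoint agg_level (m : nat) : {set {set 'I_n}} :=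
  match m with
  | 0 => [set [set i] | i : 'I_n]
  | m'.+1 => next_level (agg_level m')
  end.

Definition Gk (k : nat) : {set {set 'I_n}} := agg_level k.-1.

End Aggregated.

(* Main.v *)
Require Import Defs.
From HB Require Import structures.
From mathcomp Require Import all_boot all_order all_algebra.
From mathcomp Require Import all_classical all_reals all_analysis.
Import Order.TTheory GRing.Theory Num.Theory.
Local Open Scope ring_scope.

Section Proof.
Variables (R : realType) (n : nat) (f : ('I_n -> R) -> ('I_n -> R)) (lam : R).
Hypothesis fmono : forall x y : 'I_n -> R, (forall j, x j <= y j) -> forall l, f x l <= f y l.

Definition good (x : 'I_n -> R) := (forall l, f x l <= lam + x l) /\ (forall l, 0 <= x l).
Definition Bnd (i j : 'I_n) := exists G : R -> R, (forall t, 0 <= G t) /\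
  {homo G : a b / a <= b} /\ (forall x, good x -> x j <= G (x i)).

Lemma Bnd_refl i : Bnd i i.
Proof.
exists (fun t => Num.max t 0); split; first by move=> t; rewrite le_max lexx orbT.
split; first by move=> a b ab; rewrite ge_max !le_max ab lexx orbT.
by move=> x _; rewrite le_max lexx.
Qed.

Lemma Bnd_trans i j k : Bnd i j -> Bnd j k -> Bnd i k.
Proof.
move=> [G1 [G10 [G1m G1b]]] [G2 [G20 [G2m G2b]]].
exists (fun t => G2 (G1 t)); split => //; split; first by move=> a b ab; apply/G2m/G1m.
by move=> x gx; apply: le_trans (G2b x gx) _; apply/G2m/G1b.
Qed.

Lemma uniform : exists U : R -> R, (forall t, 0 <= U t) /\ {homo U : a b / a <= b} /\
  forall i j, Bnd i j -> forall x, good x -> x j <= U (x i).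
Proof.
have H : forall p : 'I_n * 'I_n, exists G : R -> R, (forall t, 0 <= G t) /\
    {homo G : a b / a <= b} /\ (Bnd p.1 p.2 -> forall x, good x -> x p.2 <= G (x p.1)).
  move=> [i j]; case: (pselect (Bnd i j)) => [[G [G0 [Gm Gb]]]|nb].
    by exists G.
  by exists (fun=> 0); split => //; split => //.
have [g hg] := choice H.
exists (fun t => \sum_(p : 'I_n * 'I_n) g p t).
split; first by move=> t; apply: sumr_ge0 => p _; case: (hg p).
split; first by move=> a b ab; apply: ler_sum => p _; case: (hg p) => _ [m _]; exact: m.
move=> i j bij x gx; have [_ [_ b]] := hg (i, j).
apply: le_trans (b bij x gx) _.
rewrite (bigD1 (i,j)) //= lerDl; apply: sumr_ge0 => p _; case: (hg p) => //.
Qed.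

Lemma min_in (J : {set 'I_n}) (x : 'I_n -> R) j' : j' \in J ->
  exists2 j0, j0 \in J & forall j, j \in J -> x j0 <= x j.
Proof.
move=> j'J.
case: (@arg_minP _ _ _ j' (fun j => j \in J) x j'J) => j0 j0J hmin.
by exists j0.
Qed.

Lemma Bnd_edge i J : diverges f i J -> (forall j j', j \in J -> j' \in J -> Bnd j j') ->
  forall j', j' \in J -> Bnd i j'.
Proof.
move=> dv hJ j' j'J.
have [U [U0 [Um Ub]]] := uniform.
pose phi := fun u => f (char_vec J u) i.
have phim : {homo phi : a b / a <= b}.
  by move=> a b ab; apply: fmono => l; rewrite /char_vec; case: ifP.
have hM : forall N : nat, exists M : R, 0 <= M /\ forall u, M <= u -> lam + N%:R < phi u.
  move=> N.
  have := (cvgryPge _).1 dv (lam + N%:R + 1).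
  move=> [M [Mr HM]].
  exists (Num.max M 0 + 1); split; first by rewrite addr_ge0 // le_max lexx orbT.
  move=> u Mu.
  have : lam + N%:R + 1 <= phi u.
    apply: HM; apply: lt_le_trans Mu; rewrite ltr_pwDr // ?ltr01 // le_max lexx //.
  apply: lt_le_trans; rewrite ltrDl ltr01 //.
have [M hM'] := choice hM.
pose h := fun t : R => \sum_(0 <= k < (Num.truncn t).+2) M k.
exists (fun t => U (h t)); split => //; split.
  move=> a b ab; apply: Um.
  have le := le_truncn ab.
  rewrite /h [in X in _ <= X](@big_cat_nat _ _ _ (Num.truncn a).+2) //=.
  by rewrite lerDl; apply: sumr_ge0 => k _; case: (hM' k).
move=> x [fx x0].
have [j0 j0J hmin] := @min_in J x j' j'J.
have le : forall l, char_vec J (x j0) l <= x l.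
  by move=> l; rewrite /char_vec; case: ifP => [lJ|_]; [apply: hmin | apply: x0].
have hphi : phi (x j0) <= lam + x i := le_trans (fmono _ _ le i) (fx i).
have hh : x j0 <= h (x i).
  pose N := (Num.truncn (x i)).+1.
  have : x j0 < M N.
    case: (ltP (x j0) (M N)) => // MN.
    have := (hM' N).2 _ MN.
    have := truncnS_gt (x i).
    move=> a b; have := lt_le_trans b hphi.
    by rewrite ltrD2l ltNge (ltW a).
  move=> lt; apply: (ltW (lt_le_trans lt _)).
  rewrite /h big_nat_recr //= lerDr; apply: sumr_ge0 => k _; case: (hM' k) => //.
apply: le_trans (Ub _ _ (hJ _ _ j0J j'J) x (conj fx x0)) _.
exact: Um.
Qed.

Definition Inv (L : {set {set 'I_n}}) := forall I, I \in L ->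
  (exists a, a \in I) /\ forall i j, i \in I -> j \in I -> Bnd i j.

Lemma edge_Bnd L I J : Inv L -> agg_edge f L I J ->
  forall i j, i \in I -> j \in J -> Bnd i j.
Proof.
move=> iv /and3P [IL JL /asboolP [i0 i0I dv]] i j iI jJ.
apply: (Bnd_trans _ _ _ ((iv I IL).2 _ _ iI i0I) (Bnd_edge _ _ dv _ _ jJ)).
by move=> a b aJ bJ; exact: (iv J JL).2.
Qed.

Lemma conn_Bnd L I J : Inv L -> I \in L -> connect (agg_edge f L) I J ->
  forall i j, i \in I -> j \in J -> Bnd i j.
Proof.
move=> iv IL /connectP [p pth ->].
elim: p I IL pth => [|K p IH] I IL /=.
  by move=> _ i j iI jI; exact: (iv I IL).2.
case/andP => eIK pth i j iI jl.
have KL : K \in L by case/and3P: eIK.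
have [[k kK] _] := iv K KL.
exact: (Bnd_trans _ _ _ (edge_Bnd _ _ _ iv eIK _ _ iI kK) (IH K KL pth k j kK jl)).
Qed.

Lemma step L : Inv L -> Inv (next_level f L).
Proof.
move=> iv Y /imsetP [X XL ->]; split.
  have [[a aX] _] := iv X XL; exists a.
  by apply/bigcupP; exists X => //; rewrite XL /communicate eqxx.
move=> i j /bigcupP [I /andP [IL cXI] iI] /bigcupP [J /andP [JL cXJ] jJ].
apply: (conn_Bnd _ _ _ iv IL _ _ _ iI jJ); apply: (connect_trans (y:=X)).
  by case/orP: cXI => [/eqP ->| /andP [_ c]]; [exact: connect0 | exact c].
by case/orP: cXJ => [/eqP <-| /andP [c _]]; [exact: connect0 | exact c].
Qed.

Lemma Inv_level m : Inv (agg_level f m).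
Proof.
elim: m => [|m IH]; last exact: step.
move=> I /imsetP [a _ ->]; split; first by exists a; rewrite inE.
by move=> i j; rewrite !inE => /eqP -> /eqP ->; exact: Bnd_refl.
Qed.

End Proof.

Theorem lemma3p4 (R : realType) (n : nat) (f : ('I_n -> R) -> ('I_n -> R))
    (hf : topical f) (lam : R) (k : nat) (hk : (1 <= k)%N) :
  exists H : \bar R -> \bar R,
    (forall t, H t != +oo%E) /\
    forall X : {set 'I_n}, X \in Gk f k ->
    forall i j : 'I_n,
      i \in scc_sigma f (Gk f k) X -> j \in scc_sigma f (Gk f k) X ->
    forall x : 'I_n -> R,
      (forall l, f x l <= lam + x l) -> (forall l, 0 <= x l) ->
      ((x j)%:E <= H (x i)%:E)%E.
Proof.
have fm := hf.2.
have [U [_ [_ Ub]]] := @uniform R n f lam.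
exists (fun t => (U (fine t))%:E); split => // X XG i j iS jS x fx x0.
rewrite lee_fin /=; apply: Ub; last by split.
have iv := @Inv_level R n f lam fm k.-1.
have := (@step R n f lam fm _ iv _ (imset_f _ XG)).2 i j iS jS.
by [].
Qed.
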